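(* Let $S$ be a Hausdorff semitopological semigroup which is algebraically a primitive inverse semigroup, $S=\sum_{i\in\mathscr I}B_{\lambda_i}(G_i)$. Then: (i) for every $i\in\mathscr I$, $\alpha_i,\beta_i\in\lambda_i$ and every $(\alpha_i,g_i,\beta_i)\in(G_i)_{\alpha_i,\beta_i}$ there exists an open neighbourhood $U$ of $(\alpha_i,g_i,\beta_i)$ in $S$ with $U\subseteq (G_i)_{\alpha_i,\beta_i}$; hence every set $(G_i)_{\alpha_i,\beta_i}$ is open in $S$; (ii) every non-zero idempotent of $S$ is an isolated point of the subspace $E(S)$ of idempotents.
   Context: All spaces are Hausdorff; a semitopological semigroup is a Hausdorff space with separately continuous associative operation. For a group $G$ and a cardinal $\lambda\ge1$, the Brandt semigroup $B_\lambda(G)$ is $(\lambda\times G\times\lambda)\cup\{0\}$ with $(\alpha,a,\beta)(\gamma,b,\delta)=(\alpha,ab,\delta)$ if $\beta=\gamma$ and $0$ otherwise, $0$ being zero. The orthogonal sum of semigroups $T_\iota$ with zeros is $\{0\}\cup\bigcup_\iota(T_\iota\setminus\{0_\iota\})$ with products computed in $T_\iota$ when both factors lie in the same $T_\iota$ and the product is non-zero, and equal to $0$ otherwise. A primitive inverse semigroup is (up to isomorphism) exactly an orthogonal sum $\sum_{i\in\mathscr I}B_{\lambda_i}(G_i)$ of Brandt semigroups; we identify each $B_{\lambda_i}(G_i)$ with a subsemigroup of $S$ and write $(G_i)_{\alpha,\beta}=\{(\alpha,g,\beta):g\in G_i\}$ for $\alpha,\beta\in\lambda_i$. *)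

(* Defs.v *)
From Stdlib Require Import Classical ClassicalEpsilon.
Set Implicit Arguments.

Record topology (X : Type) := {
  is_open : (X -> Prop) -> Prop;
  open_full : is_open (fun _ => True);
  open_inter : forall U V, is_open U -> is_open V -> is_open (fun x => U x /\ V x);
  open_union : forall F : (X -> Prop) -> Prop,
      (forall U, F U -> is_open U) -> is_open (fun x => exists U, F U /\ U x)
}.

Definition hausdorff (X : Type) (T : topology X) : Prop :=
  forall x y : X, x <> y ->
    exists U V, is_open T U /\ is_open T V /\ U x /\ V y /\
                (forall z, U z -> V z -> False).

Definition continuous (X : Type) (T : topology X) (f : X -> X) : Prop :=
  forall U, is_open T U -> is_open T (fun x => U (f x)).

(** Semitopological semigroup: separately continuous multiplication
    (associativity of the concrete operation below holds automatically). *)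
Definition semitopological (X : Type) (T : topology X) (mul : X -> X -> X) : Prop :=
  hausdorff T /\ (forall a, continuous T (mul a)) /\
  (forall a, continuous T (fun x => mul x a)).

Record group_on (G : Type) := {
  gmul : G -> G -> G;
  gone : G;
  ginv : G -> G;
  gmulA : forall x y z, gmul x (gmul y z) = gmul (gmul x y) z;
  gmul1l : forall x, gmul gone x = x;
  gmul1r : forall x, gmul x gone = x;
  gmulVl : forall x, gmul (ginv x) x = gone;
  gmulVr : forall x, gmul x (ginv x) = gone
}.

(** Orthogonal sum of Brandt semigroups B_{lambda_i}(G_i), i in I.
    [None] is the zero; [Some (existT i (a,g,b))] is (a,g,b) in B_{lambda_i}(G_i). *)
Definition PIS (I : Type) (L G : I -> Type) : Type :=
  option {i : I & (L i * G i * L i)%type}.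

Definition pis_mul (I : Type) (L G : I -> Type) (grp : forall i, group_on (G i))
  (x y : PIS L G) : PIS L G :=
  match x, y with
  | Some (existT _ i (a, g, b)), Some (existT _ j (c, h, d)) =>
      match excluded_middle_informative (i = j) with
      | left e =>
          match e in _ = j' return L j' -> G j' -> L j' -> PIS L G with
          | eq_refl => fun c h d =>
              if excluded_middle_informative (b = c)
              then Some (existT _ i (a, gmul (grp i) g h, d))
              else None
          end c h d
      | right _ => None
      end
  | _, _ => None
  end.

Definition block (I : Type) (L G : I -> Type) (i : I) (al be : L i) : PIS L G -> Prop :=
  fun x => exists g : G i, x = Some (existT _ i (al, g, be)).

Definition idempotent (X : Type) (mul : X -> X -> X) (x : X) : Prop := mul x x = x.

(* Main.v *)
Require Import Defs.
From Stdlib Require Import Classical ClassicalEpsilon FunctionalExtensionality PropExtensionality Eqdep.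

Section H.
Variables (I : Type) (L G : I -> Type) (grp : forall i, group_on (G i)).

Lemma mul_same i a g b c h d :
  @pis_mul I L G grp (Some (existT _ i (a,g,b))) (Some (existT _ i (c,h,d))) =
  if excluded_middle_informative (b = c)
  then Some (existT _ i (a, gmul (grp i) g h, d)) else None.
Proof.
  simpl. destruct (excluded_middle_informative (i=i)) as [e|n].
  - rewrite (EqdepTheory.UIP_refl _ _ e). reflexivity.
  - congruence.
Qed.

Lemma mul_None_l y : @pis_mul I L G grp None y = None.
Proof. reflexivity. Qed.
Lemma mul_None_r y : @pis_mul I L G grp y None = None.
Proof. destruct y as [[j [[c h] d]]|]; reflexivity. Qed.

Lemma key i al be y :
  @pis_mul I L G grp (Some (existT _ i (al, gone (grp i), al)))
    (@pis_mul I L G grp y (Some (existT _ i (be, gone (grp i), be)))) <> None ->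
  @block I L G i al be y.
Proof.
  destruct y as [[j [[c h] d]]|]; [|simpl; congruence].
  intro H.
  destruct (excluded_middle_informative (j = i)) as [e|n].
  - subst j. rewrite mul_same in H.
    destruct (excluded_middle_informative (d = be)) as [e2|n2]; [|exfalso; apply H; apply mul_None_r].
    subst d. rewrite mul_same in H.
    destruct (excluded_middle_informative (al = c)) as [e3|n3]; [|congruence].
    subst c. exists h. reflexivity.
  - exfalso. apply H. simpl.
    destruct (excluded_middle_informative (j = i)) as [e|_]; [congruence|].
    first [reflexivity | apply mul_None_r].
Qed.

End H.

Theorem corollary2p3 (I : Type) (L G : I -> Type)
  (L_nonempty : forall i, inhabited (L i))
  (grp : forall i, group_on (G i))
  (T : topology (PIS L G))
  (HS : semitopological T (pis_mul grp)) :
  (forall (i : I) (al be : L i) (g : G i),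
     exists U, is_open T U /\ U (Some (existT _ i (al, g, be))) /\
               (forall x, U x -> @block I L G i al be x))
  /\ (forall (i : I) (al be : L i), is_open T (@block I L G i al be))
  /\ (forall e : PIS L G, idempotent (pis_mul grp) e -> e <> None ->
        exists U, is_open T U /\ U e /\
          (forall x, U x -> idempotent (pis_mul grp) x -> x = e)).
Proof.
  destruct HS as [Hh [Hl Hr]].
  assert (P1 : forall (i : I) (al be : L i) (g : G i),
     exists U, is_open T U /\ U (Some (existT _ i (al, g, be))) /\
               (forall x, U x -> @block I L G i al be x)).
  { intros i al be g.
    set (x := Some (existT (fun i => (L i * G i * L i)%type) i (al, g, be))).
    assert (nx : x <> None) by discriminate.
    destruct (Hh x None nx) as [U [V [oU [oV [Ux [V0 dUV]]]]]].
    set (ea := Some (existT (fun i => (L i * G i * L i)%type) i (al, gone (grp i), al))).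
    set (eb := Some (existT (fun i => (L i * G i * L i)%type) i (be, gone (grp i), be))).
    exists (fun y => U (pis_mul grp ea (pis_mul grp y eb))). split; [|split].
    - apply (Hr eb (fun z => U (pis_mul grp ea z))). apply (Hl ea U oU).
    - unfold x, ea, eb. rewrite mul_same.
      destruct (excluded_middle_informative (be = be)) as [_|n]; [|congruence].
      rewrite mul_same.
      destruct (excluded_middle_informative (al = al)) as [_|n]; [|congruence].
      rewrite gmul1r, gmul1l. exact Ux.
    - intros y Uy. apply (@key I L G grp). intro E. unfold ea, eb in Uy. rewrite E in Uy. exact (dUV None Uy V0). }
  assert (P2 : forall (i : I) (al be : L i), is_open T (@block I L G i al be)).
  { intros i al be.
    assert (E : @block I L G i al be = fun x => exists U,
       (is_open T U /\ forall y, U y -> @block I L G i al be y) /\ U x).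
    { apply functional_extensionality. intro x. apply propositional_extensionality.
      split.
      - intros [g ->]. destruct (P1 i al be g) as [U [oU [Ux sU]]].
        exists U. auto.
      - intros [U [[_ sU] Ux]]. auto. }
    rewrite E. apply open_union. intros U [oU _]. exact oU. }
  split; [exact P1|split; [exact P2|]].
  intros e ide ne.
  destruct e as [[i [[a g] b]]|]; [|congruence].
  unfold idempotent in ide. rewrite mul_same in ide.
  destruct (excluded_middle_informative (b = a)) as [e1|n]; [|discriminate].
  subst b.
  exists (@block I L G i a a). split; [apply P2|split; [exists g; reflexivity|]].
  assert (Hid : forall h, gmul (grp i) h h = h -> h = gone (grp i)).
  { intros h Hh2.
    transitivity (gmul (grp i) (gmul (grp i) (ginv (grp i) h) h) h).
    - rewrite gmulVl, gmul1l. reflexivity.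
    - rewrite <- gmulA, Hh2, gmulVl. reflexivity. }
  assert (gg : gmul (grp i) g g = g).
  { inversion ide. apply inj_pair2 in H0. congruence. }
  intros x [h ->] idx. unfold idempotent in idx. rewrite mul_same in idx.
  destruct (excluded_middle_informative (a = a)) as [_|n]; [|congruence].
  assert (hh : gmul (grp i) h h = h).
  { inversion idx. apply inj_pair2 in H0. congruence. }
  rewrite (Hid h hh), (Hid g gg). reflexivity.
Qed.
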